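(* Let $\psi$ be a difference-of-ratios (DoR) fairness property, let $\pi$ be a Static-Fair shield with period $T$, and let $\tau=\tau_1\cdots\tau_m\in\mathtt{FT}^{mT}_{\theta,\pi}$ with $|\tau_i|=T$ for all $i\le m$. If $\mathtt{den}^g(\tau_i)=\mathtt{den}^g(\tau_j)$ for all $i,j\le m$ and $g\in\{a,b\}$, then $\psi(\tau)\le\kappa$.
   Context: Input space $\mathcal{X}=\{a,b\}\times\{0,1\}\times\mathbb{C}$ ($\mathbb{C}\subset\mathbb{R}_{\ge0}$ finite; an input $x=(g,r,c)$ is group, recommended decision, intervention cost), output space $\mathcal{Y}=\{0,1\}$, input distribution $\theta\in\mathcal{D}(\mathcal{X})$, bias threshold $\kappa$. A shield is $\pi:(\mathcal{X}\times\mathcal{Y})^*\times\mathcal{X}\to\mathcal{Y}$, and $\Pi^T$ the shields defined on $(\mathcal{X}\times\mathcal{Y})^{\le T}\times\mathcal{X}$. $\mathtt{FT}^t_{\theta,\pi}$: traces $(x_1,y_1)\dots(x_t,y_t)$ with $\theta(x_i)>0$ and $y_i=\pi((x_1,y_1)\dots(x_{i-1},y_{i-1}),x_i)$. $\mathit{cost}(\tau)=\sum c_i\mathbb{1}[r_i\ne y_i]$, $\mathbb{E}[\mathit{cost};\theta,\pi,T]=\sum_{\tau\in(\mathcal{X}\times\mathcal{Y})^T}\mathit{cost}(\tau)\prod\theta(x_i)\mathbb{1}[\tau\in\mathtt{FT}^T_{\theta,\pi}]$. A statistic is single-counter if it maps traces to $\mathbb{N}$, additive if $\mu(\tau\tau')=\mu(\tau)+\mu(\tau')$.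 $\psi$ is DoR if for each group $g$ the welfare is $\mathtt{WF}^g(\tau)=\mathtt{num}^g(\tau)/\mathtt{den}^g(\tau)$ with $\mathtt{num}^g,\mathtt{den}^g$ additive single-counter statistics, and $\psi(\tau)=|\mathtt{WF}^a(\tau)-\mathtt{WF}^b(\tau)|$ (with $\psi=0$ if a welfare is undefined). A finite-horizon (FinHzn) shield for horizon $T$ is $\pi^*\in\arg\min_{\pi\in\Pi_{\mathtt{fair}}^{\theta,T}}\mathbb{E}[\mathit{cost};\theta,\pi,T]$ with $\Pi_{\mathtt{fair}}^{\theta,T}=\{\pi\in\Pi^T:\forall\tau\in\mathtt{FT}^T_{\theta,\pi},\psi(\tau)\le\kappa\}$. The concatenation of shields $\pi_1,\pi_2,\dots\in\Pi^T$ is the shield $\pi$ with $\pi(\tau\tau',x)=\pi_{j+1}(\tau',x)$ whenever $|\tau|=jT$ and $|\tau'|<T$. A Static-Fair shield is the concatenation of infinitely many copies of one FinHzn shield. *)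

(* Defs.v *)
From HB Require Import structures.
From mathcomp Require Import all_boot all_order all_algebra.
From mathcomp Require Import reals.
Set Implicit Arguments. Unset Strict Implicit. Unset Printing Implicit Defensive.
Import Order.TTheory GRing.Theory Num.Theory.
Local Open Scope ring_scope.

Inductive grp := ga | gb.
Definition grp_code (g : grp) : bool := if g is ga then true else false.
Definition grp_decode (b : bool) : grp := if b then ga else gb.
Lemma grp_codeK : cancel grp_code grp_decode. Proof. by case. Qed.
HB.instance Definition _ := Equality.copy grp (can_type grp_codeK).
HB.instance Definition _ := Finite.copy grp (can_type grp_codeK).

Section Shields.
Variable R : realType.
Variable C : seq R.  (* the finite set C of intervention costs *)

Definition X := (grp * bool * seq_sub C)%type.
Definition grp_of (x : X) : grp := x.1.1.
Definition rec_of (x : X) : bool := x.1.2.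
Definition cost_of (x : X) : R := ssval x.2.

Definition trace := seq (X * bool).
(* A shield: (X x Y)^* x X -> Y.  A shield of Pi^T is modelled as a total
   function; only its values on traces of length <= T are ever used. *)
Definition shield := trace -> X -> bool.

Definition distribution (theta : {ffun X -> R}) :=
  (forall x, 0 <= theta x) /\ \sum_x theta x = 1.

Fixpoint ft_from (theta : {ffun X -> R}) (pi : shield) (p tau : trace) : bool :=
  match tau with
  | [::] => true
  | (x, y) :: s => [&& 0 < theta x, y == pi p x & ft_from theta pi (rcons p (x, y)) s]
  end.
Definition FT (theta : {ffun X -> R}) (pi : shield) (t : nat) (tau : trace) : bool :=
  (size tau == t) && ft_from theta pi [::] tau.

Definition cost (tau : trace) : R :=
  \sum_(xy <- tau) cost_of xy.1 * (rec_of xy.1 != xy.2)%:R.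

Definition exp_cost (theta : {ffun X -> R}) (pi : shield) (T : nat) : R :=
  \sum_(tau : T.-tuple (X * bool))
     cost tau * (\prod_(xy <- tau) theta xy.1) * (FT theta pi T tau)%:R.

Definition statistic := trace -> nat.
Definition additive_stat (mu : statistic) :=
  forall tau tau' : trace, mu (tau ++ tau') = (mu tau + mu tau')%N.

(* Difference-of-ratios property built from num^g, den^g;
   psi = 0 if a welfare is undefined (zero denominator). *)
Definition dor (num den : grp -> statistic) (tau : trace) : R :=
  if (den ga tau == 0%N) || (den gb tau == 0%N) then 0
  else `| (num ga tau)%:R / (den ga tau)%:R - (num gb tau)%:R / (den gb tau)%:R |.

Definition is_DoR_decomp (num den : grp -> statistic) :=
  forall g, additive_stat (num g) /\ additive_stat (den g).

Definition fair (theta : {ffun X -> R}) (psi : trace -> R) (kappa : R)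
    (T : nat) (pi : shield) :=
  forall tau, FT theta pi T tau -> psi tau <= kappa.

Definition FinHzn (theta : {ffun X -> R}) (psi : trace -> R) (kappa : R)
    (T : nat) (pistar : shield) :=
  fair theta psi kappa T pistar /\
  forall pi', fair theta psi kappa T pi' ->
    exp_cost theta pistar T <= exp_cost theta pi' T.

Definition concatenation (T : nat) (pis : nat -> shield) (pi : shield) :=
  forall (j : nat) (tau tau' : trace) (x : X),
    size tau = (j * T)%N -> (size tau' < T)%N ->
    pi (tau ++ tau') x = pis j.+1 tau' x.

Definition StaticFair (theta : {ffun X -> R}) (psi : trace -> R) (kappa : R)
    (T : nat) (pi : shield) :=
  exists pistar, FinHzn theta psi kappa T pistar /\
                 concatenation T (fun _ => pistar) pi.

End Shields.

(* Main.v *)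
Require Import Defs.
From HB Require Import structures.
From mathcomp Require Import all_boot all_order all_algebra.
From mathcomp Require Import reals.
From mathcomp Require Import zify ring lra.
Import Order.TTheory GRing.Theory Num.Theory.
Local Open Scope ring_scope.

Section Aux.
Variable R : realType.
Variable C : seq R.

Lemma ft_cat (theta : {ffun X C -> R}) (pi : shield C) p s s' :
  ft_from theta pi p (s ++ s') = ft_from theta pi p s && ft_from theta pi (p ++ s) s'.
Proof.
elim: s p => [|[x y] s IH] p /=; first by rewrite cats0.
by rewrite IH -cats1 -catA /= !andbA.
Qed.

Lemma ft_shift (theta : {ffun X C -> R}) (pi pistar : shield C) T pre j :
  concatenation T (fun _ => pistar) pi -> size pre = (j * T)%N ->
  forall s p, (size p + size s <= T)%N ->
  ft_from theta pi (pre ++ p) s = ft_from theta pistar p s.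
Proof.
move=> hc hpre; elim => [|[x y] s IH] p //= hs.
rewrite (hc j) //; last by move: hs; rewrite /=; lia.
by rewrite rcons_cat IH // size_rcons; move: hs => /=; lia.
Qed.

Lemma ft_blocks (theta : {ffun X C -> R}) (pi pistar : shield C) T :
  concatenation T (fun _ => pistar) pi ->
  forall taus : seq (trace C), (forall s, s \in taus -> size s = T) ->
  forall pre j, size pre = (j * T)%N -> ft_from theta pi pre (flatten taus) ->
  forall s, s \in taus -> FT theta pistar T s.
Proof.
move=> hc; elim => [|t ts IH] hs pre j hpre //=.
rewrite ft_cat => /andP [h1 h2] s.
have ht : size t = T by apply: hs; rewrite mem_head.
rewrite inE => /orP [/eqP -> | hin].
  rewrite /FT ht eqxx /=.
  by rewrite -(@ft_shift theta pi pistar T pre j hc hpre t [::]) ?cats0 //= ht add0n.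
apply: (IH _ (pre ++ t) j.+1 _ h2 s hin).
  by move=> u hu; apply: hs; rewrite inE hu orbT.
by rewrite size_cat hpre ht; lia.
Qed.

Lemma add_nil (mu : statistic C) : additive_stat mu -> mu [::] = 0%N.
Proof. by move=> h; have := h [::] [::]; rewrite cat0s; lia. Qed.

Lemma add_flatten (mu : statistic C) : additive_stat mu ->
  forall ss, mu (flatten ss) = (\sum_(s <- ss) mu s)%N.
Proof.
move=> h; elim => [|s ss IH] /=; first by rewrite big_nil add_nil.
by rewrite h IH big_cons.
Qed.

Lemma dor_ge0 (num den : grp -> statistic C) tau : 0 <= dor num den tau.
Proof. by rewrite /dor; case: ifP. Qed.

Fixpoint gen (pistar : shield C) (x0 : X C) (p : trace C) (n : nat) : trace C :=
  if n is n'.+1 then (x0, pistar p x0) :: gen pistar x0 (rcons p (x0, pistar p x0)) n'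
  else [::].

Lemma gen_ft (theta : {ffun X C -> R}) pistar x0 : 0 < theta x0 ->
  forall n p, ft_from theta pistar p (gen pistar x0 p n).
Proof. by move=> hx; elim => [|n IH] p //=; rewrite hx eqxx IH. Qed.

Lemma gen_size pistar x0 n p : size (gen pistar x0 p n) = n.
Proof. by elim: n p => [|n IH] p //=; rewrite IH. Qed.

End Aux.
Arguments add_nil {R C}.
Arguments add_flatten {R C}.
Arguments dor_ge0 {R C}.
Arguments gen {R C}.
Arguments gen_ft {R C}.
Arguments gen_size {R C}.

Theorem theorem6p2 (R : realType) (C : seq R) (hC : forall c, c \in C -> 0 <= c)
    (theta : {ffun X C -> R}) (htheta : distribution theta) (kappa : R)
    (num den : grp -> statistic C) (hdor : is_DoR_decomp num den)
    (T : nat) (pi : shield C)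
    (hpi : StaticFair theta (dor num den) kappa T pi)
    (taus : seq (trace C))
    (hsize : forall s, s \in taus -> size s = T)
    (hFT : FT theta pi (size taus * T) (flatten taus))
    (hden : forall g s1 s2, s1 \in taus -> s2 \in taus -> den g s1 = den g s2) :
  dor num den (flatten taus) <= kappa.
Proof.
case: hpi => pistar [[hfair _] hc].
have kap0 : 0 <= kappa.
  case: htheta => hpos hsum.
  have [x0 hx0] : exists x0, 0 < theta x0.
    case: (pickP (fun x => 0 < theta x)) => [x0 hx0 | hn]; first by exists x0.
    have : \sum_x theta x = 0 by apply: big1 => x _; apply/eqP; rewrite eq_le hpos andbT leNgt hn.
    by rewrite hsum; move/eqP; rewrite oner_eq0.
    apply: le_trans (@dor_ge0 _ _ num den (@gen _ _ pistar x0 [::] T)) (hfair _ _).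
  by rewrite /FT gen_size eqxx; apply: gen_ft.
have hblk := @ft_blocks _ _ theta pi pistar T hc taus hsize [::] 0 erefl (proj2 (andP hFT)).
have hk : forall s, s \in taus -> dor num den s <= kappa by move=> s /hblk /hfair.
case: taus hsize hFT hden hblk hk => [|t ts] hsize hFT hden hblk hk.
  by rewrite /dor /= (add_nil _ (proj2 (hdor ga))) eqxx /=.
set taus := t :: ts.
have hD : forall g, den g (flatten taus) = (size taus * den g t)%N.
  move=> g; rewrite add_flatten; last by case: (hdor g).
  rewrite (eq_big_seq (fun=> den g t)); last by move=> s hs; apply: hden => //; rewrite mem_head.
  by rewrite big_const_seq count_predT iter_addn_0 mulnC.
have hN : forall g, ((num g (flatten taus))%:R : R) = \sum_(s <- taus) (num g s)%:R.
  by move=> g; rewrite add_flatten ?natr_sum //; case: (hdor g).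
rewrite /dor !hD !muln_eq0 /=.
case: eqP => [da0|/eqP da0] //=; case: eqP => [db0|/eqP db0] //=.
have hs : forall s, s \in taus -> dor num den s =
   `| (num ga s)%:R / (den ga t)%:R - (num gb s)%:R / (den gb t)%:R |.
  move=> s hs; rewrite /dor !(hden _ s t) ?mem_head //.
  by rewrite (negbTE da0) (negbTE db0).
set m := size taus.
have m0 : (m%:R : R) != 0 by rewrite pnatr_eq0.
have da0' : ((den ga t)%:R : R) != 0 by rewrite pnatr_eq0.
have db0' : ((den gb t)%:R : R) != 0 by rewrite pnatr_eq0.
rewrite !hN !natrM.
have -> : (\sum_(s <- taus) (num ga s)%:R) / (m%:R * (den ga t)%:R) -
          (\sum_(s <- taus) (num gb s)%:R) / (m%:R * (den gb t)%:R) =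
          (\sum_(s <- taus) ((num ga s)%:R / (den ga t)%:R - (num gb s)%:R / (den gb t)%:R)) / m%:R :> R.
  rewrite sumrB -!mulr_suml; field; rewrite m0 da0' db0' //.
rewrite normrM normfV normr_nat ler_pdivrMr ?ltr0n ?lt0n //.
apply: le_trans (ler_norm_sum _ _ _) _.
apply: le_trans (_ : \sum_(s <- taus) kappa <= _).
  by rewrite big_seq_cond [X in _ <= X]big_seq_cond; apply: ler_sum => s /andP [hs' _]; rewrite -hs // hk.
by rewrite big_const_seq count_predT iter_addr_0 mulr_natr.
Qed.
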